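(* If $G$ is a graph on $n$ vertices with vertex connectivity $\kappa$, then $\operatorname{th}_{\operatorname{H}}(G)\geq \lceil 2\sqrt{n-\kappa}+\kappa-1\rceil$.
   Context: All graphs are finite, simple and undirected; vertex connectivity follows the usual convention ($\kappa(K_n)=n-1$, and $\kappa=0$ for disconnected graphs). Hopping color change rule: a blue vertex $v$ may force a white vertex $w$ to become blue if $v$ has not previously performed a force and every neighbor of $v$ is blue. For an initial blue set $B$, a chronological list of forces of $B$ is a sequence of such forces applied one at a time until no further force is possible; its underlying unordered set is a set of forces of $B$. $B$ is a hopping forcing set if some chronological list of forces of $B$ turns all vertices blue. For a set of forces $\mathcal F$ of $B$, let $\mathcal F^{(0)}=B$ and for $t\geq1$ let $\mathcal F^{(t)}$ be the set of vertices $w\notin U_{t-1}:=\bigcup_{i=0}^{t-1}\mathcal F^{(i)}$ for which there is $(v\to w)\in\mathcal F$ with $v\in U_{t-1}$ and all neighbors of $v$ in $U_{t-1}$. $\operatorname{pt}_{\operatorname{H}}(G;\mathcal F)$ is the least $t$ with $\bigcup_{i=0}^t\mathcal F^{(i)}=V(G)$ ($\infty$ if none); $\operatorname{pt}_{\operatorname{H}}(G;B)$ is the minimum of $\operatorname{pt}_{\operatorname{H}}(G;\mathcal F)$ over sets of forces $\mathcal F$ of $B$ ($\infty$ if $B$ is not a hopping forcing set). The hopping throttling number is $\operatorname{th}_{\operatorname{H}}(G)=\min_{B\subseteq V(G)}\big(|B|+\operatorname{pt}_{\operatorname{H}}(G;B)\big)$. *)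

(* Defs.v *)
From Stdlib Require Import ClassicalEpsilon.
From HB Require Import structures.
From mathcomp Require Import all_boot all_order all_algebra.
From mathcomp Require Import reals.
Set Implicit Arguments. Unset Strict Implicit. Unset Printing Implicit Defensive.

(* A simple graph is a symmetric irreflexive relation [e] on a finType [T]. *)

Definition pb (P : nat -> Prop) : pred nat :=
  fun n => if excluded_middle_informative (P n) then true else false.

Definition nat_inf (P : nat -> Prop) : option nat :=
  match excluded_middle_informative (exists n, pb P n) with
  | left h => Some (ex_minn h)
  | right _ => None
  end.

Section Hopping.
Variables (T : finType) (e : rel T).

Definition induced_rel (X : {set T}) : rel T :=
  [rel x y | [&& x \in X, y \in X & e x y]].

Definition connectedb (X : {set T}) : bool :=
  [forall x in X, forall y in X, connect (induced_rel X) x y].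

(* kappa = least |S| such that G - S is disconnected or has at most one vertex;
   the set S = V always qualifies, so #|T| is a harmless default. *)
Definition kappa : nat :=
  \big[minn/#|T|]_(S : {set T} | (#|~: S| <= 1) || ~~ connectedb (~: S)) #|S|.

Definition nbrs_in (v : T) (X : {set T}) : bool := [forall u, e v u ==> (u \in X)].

(* v may force w, given the current blue set and the set of vertices that
   have already performed a force *)
Definition valid_force (blue forced : {set T}) (v w : T) : bool :=
  [&& v \in blue, v \notin forced, w \notin blue & nbrs_in v blue].

(* s is a chronological list of forces starting from state (blue, forced),
   applied one at a time until no further force is possible *)
Fixpoint chrono (blue forced : {set T}) (s : seq (T * T)) : bool :=
  match s with
  | [::] => [forall v, forall w, ~~ valid_force blue forced v w]
  | (v, w) :: s' => valid_force blue forced v w && chrono (w |: blue) (v |: forced) s'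
  end.

Definition is_force_set (B : {set T}) (F : {set T * T}) : Prop :=
  exists s : seq (T * T), chrono B set0 s /\ F = [set x | x \in s].

(* one time step: U_{t-1} |-> U_{t-1} \cup F^{(t)} *)
Definition hstep (F : {set T * T}) (U : {set T}) : {set T} :=
  U :|: [set w | (w \notin U) &&
          [exists v, [&& (v, w) \in F, v \in U & nbrs_in v U]]].

Definition layers (F : {set T * T}) (B : {set T}) (t : nat) : {set T} :=
  iter t (hstep F) B.

Definition ptF (B : {set T}) (F : {set T * T}) : option nat :=
  nat_inf (fun t => layers F B t = [set: T]).

Definition ptB (B : {set T}) : option nat :=
  nat_inf (fun t => exists F, is_force_set B F /\ ptF B F = Some t).

Definition thH : option nat :=
  nat_inf (fun k => exists B t, ptB B = Some t /\ k = #|B| + t).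

End Hopping.

(* Main.v *)
From Stdlib Require Import ClassicalEpsilon.
Require Import Defs.
From HB Require Import structures.
From mathcomp Require Import all_boot all_order all_algebra.
From mathcomp Require Import reals.
From mathcomp Require Import zify ring lra.
Import Order.TTheory GRing.Theory Num.Theory.

Section Proof.
Variables (T : finType) (e : rel T).
Hypothesis e_sym : symmetric e.

Lemma nbrs_in_mono v (X Y : {set T}) : X \subset Y -> nbrs_in e v X -> nbrs_in e v Y.
Proof.
move=> sXY /forallP H; apply/forallP=> u; apply/implyP=> euv.
by apply: (subsetP sXY); exact: (implyP (H u)).
Qed.

Lemma hstep_sub (F : {set T * T}) (U : {set T}) : U \subset hstep e F U.
Proof. exact: subsetUl. Qed.

Definition inv (F : {set T * T}) (B U : {set T}) := B \subset U /\
  forall w, w \in U -> w \notin B ->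
    exists v, [/\ (v,w) \in F, v \in U & nbrs_in e v U].

Lemma inv_layers (F : {set T * T}) (B : {set T}) i : inv F B (layers e F B i).
Proof.
elim: i => [|i [sBU IH]]; first by split=> // w ->.
rewrite /layers /= -/(layers e F B i).
have sU := hstep_sub F (layers e F B i).
split; first exact: subset_trans sBU sU.
move=> w; rewrite /hstep in_setU inE.
case/orP=> [wU|/andP[_ /existsP[v /and3P[Fvw vU nv]]]] wB.
- have [v [Fvw vU nv]] := IH w wU wB.
  exists v; split => //; first by rewrite in_setU vU.
  exact: nbrs_in_mono nv.
- exists v; split=> //; first by rewrite in_setU vU.
  exact: nbrs_in_mono nv.
Qed.

Lemma kappa_le (S : {set T}) : (#|~: S| <= 1) || ~~ connectedb e (~: S) -> kappa e <= #|S|.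
Proof.
move=> HS; rewrite /kappa.
have : S \in index_enum {set T} by rewrite mem_index_enum.
elim: (index_enum _) => [|S' l IH] //; rewrite inE big_cons.
case/orP=> [/eqP<-|Sl]; first by rewrite HS; exact: geq_minl.
case: ifP => _; last exact: IH.
exact: leq_trans (geq_minr _ _) (IH Sl).
Qed.

Lemma step_card (F : {set T * T}) (B U : {set T})
  (Ffun : forall v w w', (v,w) \in F -> (v,w') \in F -> w = w') :
  inv F B U -> #|hstep e F U| <= #|U| + (#|B| - kappa e).
Proof.
move=> [sBU IH].
set V := hstep e F U.
have sUV : U \subset V := hstep_sub F U.
case: (boolP (V \subset U)) => sVU.
  have -> : V = U by apply/eqP; rewrite eqEsubset sVU sUV.
  exact: leq_addr.
have /subsetPn [w0 w0V w0U] := sVU.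
move: w0V; rewrite /V /hstep in_setU (negbTE w0U) /= inE w0U /=.
case/existsP=> v0 /and3P[Fv0 v0U nv0].
set P := [set x | nbrs_in e x U].
set I := U :&: P.
set S := U :\: P.
have cardU : #|U| = #|I| + #|S| by rewrite cardsID.
have kS : kappa e <= #|S|.
  apply: kappa_le; apply/orP; right; apply/negP.
  have v0S : v0 \in ~: S by rewrite in_setC in_setD inE nv0.
  have w0S : w0 \in ~: S by rewrite in_setC in_setD (negbTE w0U) andbF.
  move/forallP/(_ v0)/implyP/(_ v0S)/forallP/(_ w0)/implyP/(_ w0S) => conn.
  have cl : closed (induced_rel e (~: S)) (mem U).
    have aux : forall x y, x \in ~: S -> e x y -> x \in U -> y \in U.
      move=> x y xS exy xU.
      move: xS; rewrite in_setC in_setD xU andbT inE negbK => /forallP/(_ y).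
      by rewrite exy.
    move=> x y /and3P[xS yS exy]; apply/idP/idP.
    - exact: aux xS exy.
    - by apply: aux yS _; rewrite e_sym.
  have := closed_connect cl conn.
  move=> h; move: h (v0U) w0U; rewrite -!topredE /= => -> ->; done.
have ex : forall w, w \in V :\: B -> exists2 v, v \in I & (v,w) \in F.
  move=> w /setDP[wV wB].
  case: (boolP (w \in U)) => wU.
    have [v [Fvw vU nv]] := IH w wU wB.
    by exists v => //; rewrite in_setI vU inE.
  move: wV; rewrite /V /hstep in_setU (negbTE wU) /= inE wU /=.
  case/existsP=> v /and3P[Fvw vU nv].
  by exists v => //; rewrite in_setI vU inE.
pose g w := odflt w [pick v in I | (v,w) \in F].
have gP : forall w, w \in V :\: B -> (g w \in I) && ((g w, w) \in F).
  move=> w /ex [v vI Fvw]; rewrite /g.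
  case: pickP => [u /andP[uI Fuw] | /(_ v)] /=; first by rewrite uI Fuw.
  by rewrite vI Fvw.
have ginj : {in V :\: B &, injective g}.
  move=> w1 w2 /gP/andP[_ F1] /gP/andP[_ F2] eg.
  by rewrite eg in F1; exact: Ffun F1 F2.
have cardVB : #|V :\: B| <= #|I|.
  rewrite -(card_in_imset ginj); apply: subset_leq_card.
  by apply/subsetP=> x /imsetP[w /gP/andP[gI _] ->].
have cardV : #|V| = #|B| + #|V :\: B|.
  rewrite -(cardsID B V); congr (_ + _).
  by rewrite (setIidPr (subset_trans sBU sUV)).
change (#|V| <= #|U| + (#|B| - kappa e)); lia.
Qed.

Lemma layers_card (F : {set T * T}) (B : {set T})
  (Ffun : forall v w w', (v,w) \in F -> (v,w') \in F -> w = w') i :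
  #|layers e F B i| <= #|B| + i * (#|B| - kappa e).
Proof.
elim: i => [|i IHi]; first by rewrite /= addn0.
rewrite /layers /= -/(layers e F B i).
have := @step_card F B _ Ffun (inv_layers F B i).
rewrite mulSn; lia.
Qed.

Lemma chrono_notforced (blue forced : {set T}) s :
  chrono e blue forced s -> forall x, x \in s -> x.1 \notin forced.
Proof.
elim: s blue forced => [|[v w] s IH] blue forced //= /andP[vf hc] x.
rewrite inE => /orP[/eqP->|xs] /=.
  by case/and4P: vf.
by have := IH _ _ hc x xs; rewrite in_setU1 negb_or => /andP[].
Qed.

Lemma chrono_fun (blue forced : {set T}) s :
  chrono e blue forced s -> forall v w w', (v,w) \in s -> (v,w') \in s -> w = w'.
Proof.
elim: s blue forced => [|[v0 w0] s IH] blue forced //= /andP[vf hc] v w w'.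
have nf := @chrono_notforced _ _ _ hc.
rewrite !inE => /orP[/eqP h1|h1] /orP[/eqP h2|h2].
- by case: h1 => _ ->; case: h2 => _ ->.
- by case: h1 => e1 _; have := nf _ h2; rewrite /= e1 setU11.
- by case: h2 => e1 _; have := nf _ h1; rewrite /= e1 setU11.
- exact: IH hc v w w' h1 h2.
Qed.

End Proof.

Lemma pbP (P : nat -> Prop) n : pb P n = true <-> P n.
Proof. by rewrite /pb; case: excluded_middle_informative. Qed.

Lemma nat_inf_ex (P : nat -> Prop) n : P n ->
  exists k, [/\ nat_inf P = Some k, P k & forall m, P m -> k <= m].
Proof.
move=> Pn; rewrite /nat_inf; case: excluded_middle_informative => [h|hn].
  case: ex_minnP => k /pbP Pk mink; exists k; split=> // m /pbP; exact: mink.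
by exfalso; apply: hn; exists n; apply/pbP.
Qed.

Lemma nat_inf_some (P : nat -> Prop) k : nat_inf P = Some k -> P k.
Proof.
rewrite /nat_inf; case: excluded_middle_informative => // h [<-].
by case: ex_minnP => m /pbP.
Qed.

Theorem theorem3p1 (R : realType) (T : finType) (e : rel T)
    (e_sym : symmetric e) (e_irr : irreflexive e) :
  exists k : nat, thH e = Some k /\
    (Num.ceil (2 * Num.sqrt ((#|T| - kappa e)%:R : R) + (kappa e)%:R - 1)
       <= k%:Z)%R.
Proof.
have ptT : ptB e [set: T] = Some 0.
  have P0 : exists F, is_force_set e [set: T] F /\ ptF e [set: T] F = Some 0.
    exists set0; split.
      exists [::]; split.
        by apply/forallP=> v; apply/forallP=> w; rewrite /valid_force !in_setT /= andbF.
      by apply/setP=> x; rewrite !inE.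
    rewrite /ptF; have [t [-> _ mt]] := @nat_inf_ex (fun t => layers e set0 [set: T] t = [set: T]) 0 erefl.
    by have := mt 0 erefl; rewrite leqn0 => /eqP->.
  rewrite /ptB; have [t [-> _ mt]] := @nat_inf_ex (fun t => exists F, is_force_set e [set: T] F /\ ptF e [set: T] F = Some t) 0 P0.
  by have := mt 0 P0; rewrite leqn0 => /eqP->.
have Pn : exists B t, ptB e B = Some t /\ #|T| = #|B| + t.
  by exists [set: T], 0; rewrite cardsT addn0.
have [k [Hk Pk _]] := @nat_inf_ex
  (fun k => exists B t, ptB e B = Some t /\ k = #|B| + t) #|T| Pn.
exists k; split; first exact: Hk.
case: Pk => B [t [Ht ->]].
have [F [[s [hs HF]] HpF]] := nat_inf_some _ _ Ht.
have Hl := nat_inf_some _ _ HpF.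
have Ffun : forall v w w', (v,w) \in F -> (v,w') \in F -> w = w'.
  move=> v w w'; rewrite HF !in_set => h1 h2.
exact: (@chrono_fun _ _ _ _ _ hs _ _ _ h1 h2).
have hN := @layers_card T e e_sym F B Ffun t; rewrite Hl cardsT in hN.
have kT : kappa e <= #|T|.
  by rewrite -cardsT; apply: (@kappa_le T e); rewrite setCT cards0.
have bT := max_card (mem B).
rewrite ceil_le_int.
change ((2 * Num.sqrt ((#|T| - kappa e)%:R : R) + (kappa e)%:R - 1) <= (#|B| + t)%:R)%R.
move: hN kT bT; set n := #|T|; set kp := kappa e; set b := #|B| => hN kT bT.
have x0 : (0 <= ((n - kp)%:R : R))%R by rewrite ler0n.
have ss := sqr_sqrtr x0.
have s0 := sqrtr_ge0 ((n - kp)%:R : R).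
move: ss s0; set sq := Num.sqrt _ => ss s0.
rewrite natrB // expr2 in ss.
rewrite natrD.
case: (leqP b kp) => hb.
  have : n <= b.
    have e0 : b - kp = 0 by apply/eqP; rewrite subn_eq0.
    by move: hN; rewrite e0 muln0 addn0.
  rewrite -(ler_nat R) => hnb.
  have t0 : (0 <= (t%:R : R))%R by rewrite ler0n.
  have hq : (0 <= (sq - 1) * (sq - 1))%R by rewrite -expr2 sqr_ge0.
  nra.
have : (n%:R <= b%:R + t%:R * (b%:R - kp%:R) :> R)%R.
  by rewrite -natrB ?(ltnW hb) // -natrM -natrD ler_nat.
move=> hR.
have hm : ((kp%:R : R) < b%:R)%R by rewrite ltr_nat.
have t0 : (0 <= (t%:R : R))%R by rewrite ler0n.
have hq : (0 <= (b%:R - kp%:R - sq) * (b%:R - kp%:R - sq) :> R)%R by rewrite -expr2 sqr_ge0.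
nra.
Qed.
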